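(* Let $\tau:\mathbb{F}_p((t))^d\to\mathbb{F}_p((t))^d$, $(f_1,\dots,f_d)\mapsto(tf_1,\dots,tf_d)$, and let $V$ be a compact open subgroup of $\mathbb{F}_p((t))^d$ such that $\tau(V)$ is a proper subgroup of $V$. Then there is an automorphism $\theta$ of the topological group $\mathbb{F}_p((t))^d$ such that $\theta\circ\tau=\tau\circ\theta$ and $\theta(\mathbb{F}_p[[t]]^d)=V$.
   Context: $\mathbb{F}_p((t))$ is the additive group of formal Laurent series over $\mathbb{F}_p$ with its usual locally compact topology, $\mathbb{F}_p[[t]]$ the compact open subgroup of power series; $\mathbb{F}_p((t))^d$ has the product topology. Automorphisms are of the additive topological group, not necessarily $\mathbb{F}_p((t))$-linear. *)

(* Defs.v *)
From Stdlib Require List.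
From mathcomp Require Import all_boot all_order all_algebra.
Set Implicit Arguments. Unset Strict Implicit. Unset Printing Implicit Defensive.
Import Order.TTheory GRing.Theory Num.Theory.
Local Open Scope ring_scope.

(* A formal Laurent series over F_p: coefficient function int -> 'F_p
   vanishing below some index. *)
Definition laurent_pred (p : nat) (a : int -> 'F_p) : Prop :=
  exists N : int, forall n : int, n < N -> a n = 0.

Definition LS (p : nat) := {a : int -> 'F_p | laurent_pred a}.

Definition coef (p : nat) (a : LS p) : int -> 'F_p := proj1_sig a.

Lemma laurent0 (p : nat) : laurent_pred (fun _ : int => (0 : 'F_p)).
Proof. by exists 0. Qed.

Lemma laurentD (p : nat) (a b : LS p) :
  laurent_pred (fun n => coef a n + coef b n).
Proof.
case: a => a [Na Ha]; case: b => b [Nb Hb]; exists (Num.min Na Nb) => n /=.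
by rewrite lt_min => /andP[/Ha -> /Hb ->]; rewrite addr0.
Qed.

Lemma laurentN (p : nat) (a : LS p) : laurent_pred (fun n => - coef a n).
Proof. by case: a => a [Na Ha]; exists Na => n /= /Ha ->; rewrite oppr0. Qed.

Lemma laurentT (p : nat) (a : LS p) : laurent_pred (fun n => coef a (n - 1)).
Proof.
case: a => a [Na Ha]; exists (Na + 1) => n /= hn; apply: Ha.
by rewrite ltrBlDr.
Qed.

Definition ls0 (p : nat) : LS p := exist _ _ (laurent0 p).
Definition lsadd (p : nat) (a b : LS p) : LS p := exist _ _ (laurentD a b).
Definition lsopp (p : nat) (a : LS p) : LS p := exist _ _ (laurentN a).
(* multiplication by t : coefficient of t^n in t*f is coefficient of t^(n-1) in f *)
Definition lsmulT (p : nat) (a : LS p) : LS p := exist _ _ (laurentT a).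

Definition LSd (p d : nat) := 'I_d -> LS p.
Definition vset (p d : nat) := LSd p d -> Prop.

Definition vzero (p d : nat) : LSd p d := fun _ => ls0 p.
Definition vadd (p d : nat) (x y : LSd p d) : LSd p d := fun i => lsadd (x i) (y i).
Definition vopp (p d : nat) (x : LSd p d) : LSd p d := fun i => lsopp (x i).

Definition tau (p d : nat) (x : LSd p d) : LSd p d := fun i => lsmulT (x i).

Definition powser_d (p d : nat) : vset p d :=
  fun x => forall (i : 'I_d) (n : int), n < 0 -> coef (x i) n = 0.

(* Topology: the sets x + (t^k F_p[[t]])^d, k : int, form a neighbourhood
   basis at x (this is the product of the usual locally compact topology). *)
Definition vopen (p d : nat) (U : vset p d) : Prop :=
  forall x, U x -> exists k : int, forall y : LSd p d,
    (forall (i : 'I_d) (n : int), n < k -> coef (y i) n = coef (x i) n) -> U y.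

Definition vcompact (p d : nat) (K : vset p d) : Prop :=
  forall (I : Type) (U : I -> vset p d), (forall i, vopen (U i)) ->
    (forall x, K x -> exists i, U i x) ->
    exists s : seq I, forall x, K x -> exists i, Stdlib.Lists.List.In i s /\ U i x.

Definition vsubgroup (p d : nat) (V : vset p d) : Prop :=
  V (@vzero p d) /\ (forall x y, V x -> V y -> V (vadd x y)) /\
  (forall x, V x -> V (vopp x)).

Definition vimage (p d : nat) (f : LSd p d -> LSd p d) (A : vset p d) : vset p d :=
  fun y => exists x, A x /\ f x = y.

Definition vcontinuous (p d : nat) (f : LSd p d -> LSd p d) : Prop :=
  forall U : vset p d, vopen U -> vopen (fun x => U (f x)).

Definition top_group_aut (p d : nat) (th : LSd p d -> LSd p d) : Prop :=
  (forall x y, th (vadd x y) = vadd (th x) (th y)) /\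
  exists th' : LSd p d -> LSd p d,
    (forall x, th' (th x) = x) /\ (forall y, th (th' y) = y) /\
    vcontinuous th /\ vcontinuous th'.

(* Main.v *)
Require Import Defs.
From mathcomp Require Import all_boot all_order all_algebra.
From mathcomp Require Import zify ring.
From Stdlib Require Import ProofIrrelevance FunctionalExtensionality Classical.
Set Implicit Arguments. Unset Strict Implicit. Unset Printing Implicit Defensive.
Import Order.TTheory GRing.Theory Num.Theory.
Local Open Scope ring_scope.

Lemma Fp_natr (p : nat) (hp : prime p) (c : 'F_p) : (c : nat)%:R = c.
Proof.
apply: val_inj; rewrite /= val_Fp_nat // modn_small //.
have h := ltn_ord c; have e := Fp_cast hp.
move: h; move: (nat_of_ord c) => m; rewrite e; done.
Qed.

Lemma lsext (p : nat) (a b : LS p) : (forall n, coef a n = coef b n) -> a = b.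
Proof.
case: a b => [fa ha] [fb hb] /= H.
have E : fa = fb by apply: functional_extensionality.
subst; f_equal; apply: proof_irrelevance.
Qed.

Lemma vext (p d : nat) (x y : LSd p d) :
  (forall i n, coef (x i) n = coef (y i) n) -> x = y.
Proof. move=> H; apply: functional_extensionality => i; apply: lsext; exact: H. Qed.

Lemma coef0 p n : coef (ls0 p) n = 0. Proof. by []. Qed.
Lemma coefD p (a b : LS p) n : coef (lsadd a b) n = coef a n + coef b n. Proof. by []. Qed.
Lemma coefN p (a : LS p) n : coef (lsopp a) n = - coef a n. Proof. by []. Qed.
Lemma coefT p (a : LS p) n : coef (lsmulT a) n = coef a (n - 1). Proof. by []. Qed.

Lemma laurent_shift p (a : LS p) (k : int) : laurent_pred (fun n => coef a (n - k)).
Proof.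
case: a => a [N HN]; exists (N + k) => n /= hn; apply: HN; lia.
Qed.
Definition shift p (k : int) (a : LS p) : LS p := exist _ _ (laurent_shift a k).
Lemma coefS p k (a : LS p) n : coef (shift k a) n = coef a (n - k). Proof. by []. Qed.

Lemma laurent_mono p (k : int) : laurent_pred (fun n : int => ((n == k)%:R : 'F_p)).
Proof. exists k => n hn; have -> : (n == k) = false by lia. by []. Qed.
Definition mono p k : LS p := exist _ _ (laurent_mono p k).
Lemma coefM p k n : coef (mono p k) n = (n == k)%:R. Proof. by []. Qed.

Lemma laurent_mulLP p (q : int -> 'F_p) (lo : int) (len : nat) (a : LS p) :
  laurent_pred (fun n => \sum_(i < len) q (lo + (i : nat)%:Z) * coef a (n - (lo + (i : nat)%:Z))).
Proof.
case: a => a [N HN]; exists (N + lo) => n /= hn.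
apply: big1 => i _; rewrite HN ?mulr0 //; lia.
Qed.
Definition mulLP p q lo len (a : LS p) : LS p := exist _ _ (laurent_mulLP q lo len a).
Lemma coefL p q lo len (a : LS p) n : coef (mulLP q lo len a) n =
  \sum_(i < len) q (lo + (i : nat)%:Z) * coef a (n - (lo + (i : nat)%:Z)).
Proof. by []. Qed.

Lemma coefL_one p q lo len n : coef (@mulLP p q lo len (mono p 0)) n =
  if (lo <= n) && (n < lo + (len:nat)%:Z) then q n else 0.
Proof.
rewrite coefL; case: ifP => H.
  have hi : (absz (n - lo) < len)%N by lia.
  rewrite (bigD1 (Ordinal hi)) //= big1 ?addr0.
    rewrite /= ?coefM; have -> : n - (lo + `|n - lo|%N%:Z) == 0 by lia.
    rewrite mulr1; congr q; lia.
  move=> i hne; rewrite ?coefM.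
  have -> : (n - (lo + (i : nat)%:Z) == 0) = false; last by rewrite mulr0.
  apply/negP => /eqP E; move/negP: hne; apply; apply/eqP; apply: val_inj => /=; lia.
apply: big1 => i _; rewrite ?coefM.
have -> : (n - (lo + (i : nat)%:Z) == 0) = false; last by rewrite mulr0.
have := ltn_ord i; lia.
Qed.

Definition vsingle p d (x : LSd p d) (i0 : 'I_d) : LSd p d :=
  fun i => if i == i0 then x i else ls0 p.
Definition vmuln p d (x : LSd p d) (m : nat) : LSd p d := iter m (vadd x) (@vzero p d).

Lemma coef_vmuln p d (x : LSd p d) m i n : coef (vmuln x m i) n = coef (x i) n *+ m.
Proof.
elim: m => [|m IH]; first by rewrite mulr0n.
by rewrite /vmuln iterS -/(vmuln x m) /vadd coefD IH mulrS.
Qed.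

Lemma sg_muln p d (V : vset p d) x m : vsubgroup V -> V x -> V (vmuln x m).
Proof.
move=> [h0 [hD hN]] hx; elim: m => [|m IH] //.
exact: hD hx IH.
Qed.

Lemma iter_tau p d (W : vset p d) : (forall x, W x -> W (tau x)) ->
  forall m x, W x -> W (iter m (@tau p d) x).
Proof. by move=> hW; elim=> [|m IH] x hx //=; apply: hW; apply: IH. Qed.

Definition lip p d (f : LSd p d -> LSd p d) := forall k : int, exists k' : int,
  forall x y, (forall i n, n < k' -> coef (x i) n = coef (y i) n) ->
  (forall i n, n < k -> coef (f x i) n = coef (f y i) n).

Lemma lip_cont p d (f : LSd p d -> LSd p d) : lip f -> vcontinuous f.
Proof.
move=> hl U hU x hx; have [k hk] := hU _ hx; have [k' hk'] := hl k.
exists k' => y hy; apply: hk => i n hn; exact: hk' hy i n hn.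
Qed.

Lemma aut_id p d : top_group_aut (fun x : LSd p d => x).
Proof. split=> //; exists (fun x => x); split=> //; split=> //; split=> U hU; exact: hU. Qed.

Lemma aut_comp p d (f g : LSd p d -> LSd p d) :
  top_group_aut f -> top_group_aut g -> top_group_aut (fun x => f (g x)).
Proof.
move=> [fD [f' [f1 [f2 [fc f'c]]]]] [gD [g' [g1 [g2 [gc g'c]]]]]; split.
  by move=> x y; rewrite gD fD.
exists (fun y => g' (f' y)); split; first by move=> x; rewrite f1 g1.
split; first by move=> y; rewrite g2 f2.
split=> U hU.
  exact: (gc (fun x => U (f x)) (fc U hU)).
exact: (f'c (fun x => U (g' x)) (g'c U hU)).
Qed.

Lemma add_zero p d (f : LSd p d -> LSd p d) :
  (forall x y, f (vadd x y) = vadd (f x) (f y)) -> f (@vzero p d) = @vzero p d.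
Proof.
move=> hD; set z := @vzero p d.
have z0 : forall i n, coef (z i) n = 0 by [].
have E : f z = f (vadd z z).
  by congr f; apply: vext => i n; rewrite /vadd coefD z0 addr0.
apply: vext => i n; have := congr1 (fun v => coef (v i) n) E.
rewrite hD /vadd coefD => h.
apply: (@addrI _ (coef (f z i) n)); by rewrite z0 addr0 -h.
Qed.

Lemma add_opp p d (f : LSd p d -> LSd p d) :
  (forall x y, f (vadd x y) = vadd (f x) (f y)) -> forall x, f (vopp x) = vopp (f x).
Proof.
move=> hD x; have E : f (vadd x (vopp x)) = @vzero p d.
  rewrite -(add_zero hD); congr f; apply: vext => i n.
  by rewrite /vadd /vopp coefD coefN coef0 subrr.
apply: vext => i n; have := congr1 (fun v => coef (v i) n) E.
rewrite hD /vadd /vopp coefD => /eqP; rewrite addr_eq0 => /eqP h.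
by rewrite coefN h opprK.
Qed.

Lemma transfer p d (f : LSd p d -> LSd p d) (W : vset p d) :
  top_group_aut f -> (forall x, f (tau x) = tau (f x)) ->
  vsubgroup W -> vopen W -> vcompact W -> (forall x, W x -> W (tau x)) ->
  [/\ vsubgroup (fun x => W (f x)), vopen (fun x => W (f x)),
      vcompact (fun x => W (f x)) & (forall x, W (f x) -> W (f (tau x)))].
Proof.
move=> [fD [f' [f1 [f2 [fc f'c]]]]] fT [h0 [hD hN]] hO hC hT; split.
- split; first by rewrite add_zero.
  split; first by move=> x y hx hy; rewrite fD; apply: hD.
  by move=> x hx; rewrite add_opp //; apply: hN.
- exact: fc.
- move=> I U hU hcov.
  have [s hs] := hC I (fun i y => U i (f' y)) (fun i => f'c _ (hU i))
     (fun y hy => hcov (f' y) (ltac:(by rewrite f2))).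
  exists s => x hx; have [i [hi hi2]] := hs _ hx; exists i; split=> //.
  by rewrite f1 in hi2.
- by move=> x hx; rewrite fT; apply: hT.
Qed.

Lemma coefVD p d (x y : LSd p d) i n : coef (vadd x y i) n = coef (x i) n + coef (y i) n.
Proof. by []. Qed.
Lemma coefVN p d (x : LSd p d) i n : coef (vopp x i) n = - coef (x i) n.
Proof. by []. Qed.
Lemma coefVT p d (x : LSd p d) i n : coef (tau x i) n = coef (x i) (n - 1).
Proof. by []. Qed.
Lemma coefV0 p d i n : coef (@vzero p d i) n = 0.
Proof. by []. Qed.

Definition phi p d (jo : 'I_d) (a : int) (q : 'I_d -> int -> 'F_p) (lo : int) (len : nat)
  (x : LSd p d) : LSd p d :=
  fun i => if i == jo then shift a (x jo) else lsadd (x i) (mulLP (q i) lo len (x jo)).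
Definition psi p d (jo : 'I_d) (a : int) (q : 'I_d -> int -> 'F_p) (lo : int) (len : nat)
  (y : LSd p d) : LSd p d :=
  fun i => if i == jo then shift (-a) (y jo)
           else lsadd (y i) (lsopp (mulLP (q i) lo len (shift (-a) (y jo)))).

Lemma shiftK p a (z : LS p) : shift (-a) (shift a z) = z.
Proof. by apply: lsext => n; rewrite !coefS; congr (coef z _); ring. Qed.
Lemma shiftKV p a (z : LS p) : shift a (shift (-a) z) = z.
Proof. by apply: lsext => n; rewrite !coefS; congr (coef z _); ring. Qed.

Lemma phi_jo p d jo a q lo len (x : LSd p d) : phi jo a q lo len x jo = shift a (x jo).
Proof. by rewrite /phi eqxx. Qed.
Lemma phi_ne p d jo a q lo len (x : LSd p d) i : i != jo ->
  phi jo a q lo len x i = lsadd (x i) (mulLP (q i) lo len (x jo)).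
Proof. by rewrite /phi => /negbTE ->. Qed.
Lemma psi_jo p d jo a q lo len (x : LSd p d) : psi jo a q lo len x jo = shift (-a) (x jo).
Proof. by rewrite /psi eqxx. Qed.
Lemma psi_ne p d jo a q lo len (x : LSd p d) i : i != jo ->
  psi jo a q lo len x i = lsadd (x i) (lsopp (mulLP (q i) lo len (shift (-a) (x jo)))).
Proof. by rewrite /psi => /negbTE ->. Qed.

Lemma psi_phi p d jo a q lo len (x : LSd p d) : psi jo a q lo len (phi jo a q lo len x) = x.
Proof.
apply: functional_extensionality => i; case: (eqVneq i jo) => [->|hne].
  by rewrite psi_jo phi_jo shiftK.
by apply: lsext => n; rewrite psi_ne // phi_jo shiftK coefD coefN phi_ne // coefD addrK.
Qed.

Lemma phi_psi p d jo a q lo len (x : LSd p d) : phi jo a q lo len (psi jo a q lo len x) = x.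
Proof.
apply: functional_extensionality => i; case: (eqVneq i jo) => [->|hne].
  by rewrite phi_jo psi_jo shiftKV.
by apply: lsext => n; rewrite phi_ne // psi_jo psi_ne // !coefD coefN subrK.
Qed.

Lemma phi_add p d jo a q lo len (x y : LSd p d) :
  phi jo a q lo len (vadd x y) = vadd (phi jo a q lo len x) (phi jo a q lo len y).
Proof.
apply: vext => i n; case: (eqVneq i jo) => [->|hne].
  by rewrite coefVD !phi_jo !coefS coefVD.
rewrite coefVD !phi_ne // !coefD !coefL ?coefVD -addrA -addrA; congr (_ + _).
rewrite addrCA; congr (_ + _).
rewrite -big_split /=; apply: eq_bigr => k _; by rewrite ?coefVD mulrDr.
Qed.

Lemma phi_tau p d jo a q lo len (x : LSd p d) :
  phi jo a q lo len (tau x) = tau (phi jo a q lo len x).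
Proof.
apply: vext => i n; case: (eqVneq i jo) => [->|hne].
  by rewrite coefVT !phi_jo !coefS coefVT; congr (coef _ _); ring.
rewrite coefVT !phi_ne // !coefD !coefL ?coefVT; congr (_ + _); apply: eq_bigr => k _.
by rewrite ?coefVT; congr (_ * coef _ _); ring.
Qed.

Lemma phi_lip p d jo a q lo len : lip (@phi p d jo a q lo len).
Proof.
move=> k; exists (k + `|a|%:Z + `|lo|%:Z) => x y hxy i n hn.
case: (eqVneq i jo) => [->|hne]; first by rewrite !phi_jo !coefS hxy //; lia.
rewrite !phi_ne // !coefD !coefL hxy; last by lia.
congr (_ + _); apply: eq_bigr => m _; rewrite hxy //; lia.
Qed.

Lemma psi_lip p d jo a q lo len : lip (@psi p d jo a q lo len).
Proof.
move=> k; exists (k + `|a|%:Z + `|lo|%:Z) => x y hxy i n hn.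
case: (eqVneq i jo) => [->|hne]; first by rewrite !psi_jo !coefS hxy //; lia.
rewrite !psi_ne // !coefD !coefN !coefL hxy; last by lia.
congr (_ - _); apply: eq_bigr => m _; rewrite !coefS hxy //; lia.
Qed.

Lemma phi_aut p d jo a q lo len : top_group_aut (@phi p d jo a q lo len).
Proof.
split; first exact: phi_add.
exists (psi jo a q lo len); split; first exact: psi_phi.
split; first exact: phi_psi.
split; apply: lip_cont; [exact: phi_lip | exact: psi_lip].
Qed.

Lemma vec_bound p d (x : LSd p d) :
  exists m : nat, forall i n, n < - (m%:Z) -> coef (x i) n = 0.
Proof.
suff: forall s : seq 'I_d, exists m : nat,
    forall i, i \in s -> forall n, n < - (m%:Z) -> coef (x i) n = 0.
  by case/(_ (enum 'I_d)) => m hm; exists m => i; apply: hm; rewrite mem_enum.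
elim=> [|i0 s [m hm]]; first by exists 0%N.
have [N HN] := proj2_sig (x i0).
exists (maxn m `|N|) => i; rewrite inE => /orP [/eqP -> | hi] n hn.
  apply: HN; lia.
apply: hm => //; lia.
Qed.

Lemma cpt_bound p d (W : vset p d) : vcompact W ->
  exists M : nat, forall x, W x -> forall i n, n < - (M%:Z) -> coef (x i) n = 0.
Proof.
move=> hC.
pose U (m : nat) : vset p d := fun y => forall i n, n < - (m%:Z) -> coef (y i) n = 0.
have hU : forall m, vopen (U m).
  move=> m y hy; exists (- (m%:Z)) => z hz i n hn; rewrite hz //; exact: hy.
have [s hs] := hC nat U hU (fun x _ => vec_bound x).
exists (foldr maxn 0%N s) => x hx; have [m [hm hxm]] := hs x hx.
have le : (m <= foldr maxn 0 s)%N.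
  elim: s hm {hs} => [|a s IH] //= [-> | /IH]; lia.
move=> i n hn; apply: hxm; lia.
Qed.

Lemma open0 p d (W : vset p d) : vopen W -> W (@vzero p d) ->
  exists k : int, forall y, (forall i n, n < k -> coef (y i) n = 0) -> W y.
Proof.
move=> hO h0; have [k hk] := hO _ h0; exists k => y hy; apply: hk => i n hn.
by rewrite hy.
Qed.

Lemma nat_min (P : nat -> Prop) : (exists n, P n) ->
  exists n, P n /\ forall m, P m -> (n <= m)%N.
Proof.
move=> [n hn]; elim/ltn_ind: n hn => n IH hn.
case: (classic (exists m, (m < n)%N /\ P m)) => [[m [hm hPm]] | hno].
  exact: IH hm hPm.
exists n; split=> // m hPm; rewrite leqNgt; apply/negP => hmn; apply: hno.
by exists m.
Qed.

Lemma int_min (D : int -> Prop) (M : int) : (forall n, D n -> M <= n) ->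
  (exists n, D n) -> exists a, D a /\ forall n, D n -> a <= n.
Proof.
move=> hb [n hn].
have e : forall k, D k -> (absz (k - M))%:Z + M = k.
  by move=> k hk; have := hb _ hk; lia.
have hn' : D ((absz (n - M))%:Z + M) by rewrite e.
have [m [hm hmin]] := @nat_min (fun m : nat => D (m%:Z + M)) (ex_intro _ _ hn').
exists (m%:Z + M); split => // k hk.
have := hmin (absz (k - M)); rewrite (e _ hk) => /(_ hk); have := hb _ hk; lia.
Qed.

Definition Inv p d (j : nat) (W : vset p d) :=
  [/\ vsubgroup W, vopen W, vcompact W, (forall x, W x -> W (tau x)) &
   (forall x, W x -> forall i : 'I_d, (i < j)%N -> forall n, n < 0 -> coef (x i) n = 0) /\
   (forall x (i : 'I_d), (i < j)%N -> (forall i', i' != i -> forall n, coef (x i') n = 0) ->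
      (forall n, n < 0 -> coef (x i) n = 0) -> W x)].

Lemma coef_vsingle p d (y : LSd p d) i0 i n :
  coef (vsingle y i0 i) n = if i == i0 then coef (y i) n else 0.
Proof. by rewrite /vsingle; case: ifP. Qed.

Lemma coef_if p (b : bool) (u v : LS p) n :
  coef (if b then u else v) n = if b then coef u n else coef v n.
Proof. by case: b. Qed.

Lemma zero_low p d j (W : vset p d) y : Inv j W -> W y ->
  forall j', (j' <= j)%N -> W (fun i : 'I_d => if (i < j')%N then ls0 p else y i).
Proof.
move=> [[h0 [hD hN]] hO hC hT [hA hB]] hy; elim=> [|j' IH] hj'.
  by have -> : (fun i : 'I_d => if (i < 0)%N then ls0 p else y i) = y
    by apply: functional_extensionality => i.
have IH' := IH (ltnW hj').
case: (ltnP j' d) => hjd; last first.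
  suff -> : (fun i : 'I_d => if (i < j'.+1)%N then ls0 p else y i) =
            (fun i : 'I_d => if (i < j')%N then ls0 p else y i) by [].
  apply: functional_extensionality => i; have hi := ltn_ord i.
  have -> : (i < j'.+1)%N by lia.
  by have -> : (i < j')%N by lia.
pose i0 := Ordinal hjd.
have E : forall i : 'I_d, (i == i0) = (nat_of_ord i == j').
  by move=> i; apply/eqP/eqP => [->//|h]; apply: val_inj.
have He : W (vsingle y i0).
  apply: (hB _ i0) => //.
  - by move=> i' hi' n; rewrite coef_vsingle (negbTE hi').
  - by move=> n hn; rewrite coef_vsingle eqxx; apply: hA.
have := hD _ _ IH' (hN _ He).
suff -> : (fun i : 'I_d => if (i < j'.+1)%N then ls0 p else y i) =
  vadd (fun i : 'I_d => if (i < j')%N then ls0 p else y i) (vopp (vsingle y i0)) by [].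
apply: vext => i n; rewrite coefVD coefVN coef_vsingle E !coef_if coef0.
case: (ltngtP i j') => h.
- have -> : (i < j'.+1)%N by lia.
  by rewrite oppr0 addr0.
- have -> : (i < j'.+1)%N = false by lia.
  by rewrite oppr0 addr0.
- have -> : (i < j'.+1)%N by lia.
  by rewrite subrr.
Qed.

Lemma zero_high p d j (W : vset p d) x : Inv j W -> powser_d x ->
  forall j', (j' <= j)%N -> W (fun i : 'I_d => if (i < j')%N then x i else ls0 p).
Proof.
move=> [[h0 [hD hN]] hO hC hT [hA hB]] hx; elim=> [|j' IH] hj'.
  by have -> : (fun i : 'I_d => if (i < 0)%N then x i else ls0 p) = @vzero p d
    by apply: functional_extensionality => i.
have IH' := IH (ltnW hj').
case: (ltnP j' d) => hjd; last first.
  suff -> : (fun i : 'I_d => if (i < j'.+1)%N then x i else ls0 p) =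
            (fun i : 'I_d => if (i < j')%N then x i else ls0 p) by [].
  apply: functional_extensionality => i; have hi := ltn_ord i.
  have -> : (i < j'.+1)%N by lia.
  by have -> : (i < j')%N by lia.
pose i0 := Ordinal hjd.
have E : forall i : 'I_d, (i == i0) = (nat_of_ord i == j').
  by move=> i; apply/eqP/eqP => [->//|h]; apply: val_inj.
have He : W (vsingle x i0).
  apply: (hB _ i0) => //.
  - by move=> i' hi' n; rewrite coef_vsingle (negbTE hi').
  - by move=> n hn; rewrite coef_vsingle eqxx; apply: hx.
have := hD _ _ IH' He.
suff -> : (fun i : 'I_d => if (i < j'.+1)%N then x i else ls0 p) =
  vadd (fun i : 'I_d => if (i < j')%N then x i else ls0 p) (vsingle x i0) by [].
apply: vext => i n; rewrite coefVD coef_vsingle E !coef_if coef0.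
case: (ltngtP i j') => h.
- have -> : (i < j'.+1)%N by lia.
  by rewrite addr0.
- have -> : (i < j'.+1)%N = false by lia.
  by rewrite addr0.
- have -> : (i < j'.+1)%N by lia.
  by rewrite add0r.
Qed.

Lemma down (R : int -> Prop) (lo K : int) : lo <= K -> R K ->
  (forall b, lo <= b -> R (b + 1) -> R b) -> R lo.
Proof.
move=> hle hK hS.
suff H : forall c : nat, lo <= K - c%:Z -> R (K - c%:Z).
  have E : K - (absz (K - lo))%:Z = lo by lia.
  by rewrite -E; apply: H; rewrite E.
elim=> [|c IH] h; first by rewrite subr0.
apply: hS => //; have -> : K - c.+1%:Z + 1 = K - c%:Z by lia.
apply: IH; lia.
Qed.

Lemma coef_iter_tau p d m (x : LSd p d) i n :
  coef (iter m (@tau p d) x i) n = coef (x i) (n - m%:Z).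
Proof.
elim: m n => [|m IH] n; first by rewrite /= subr0.
rewrite iterS coefVT IH; congr (coef _ _); lia.
Qed.

Lemma mono_eq (b n : int) : (n - 1 == b) = (n == b + 1).
Proof. by apply/idP/idP => /eqP h; apply/eqP; lia. Qed.

Lemma step p d j (W : vset p d) : prime p -> (j < d)%N -> Inv j W ->
  exists f : LSd p d -> LSd p d, top_group_aut f /\ (forall x, f (tau x) = tau (f x)) /\
    Inv j.+1 (fun x => W (f x)).
Proof.
move=> hp hjd hI; have hI' := hI.
case: hI => [[h0 [hD hN]] hO hC hT [hA hB]].
have [M hM] := cpt_bound hC.
have [k hk] := open0 hO h0.
pose jo := Ordinal hjd.
have Ejo : forall i : 'I_d, (i == jo) = (nat_of_ord i == j).
  by move=> i; apply/eqP/eqP => [->//|h]; apply: val_inj.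
pose ej (b : int) : LSd p d := fun i => if i == jo then mono p b else ls0 p.
have coef_ej : forall b i n, coef (ej b i) n = if i == jo then (n == b)%:R else 0.
  by move=> b i n; rewrite /ej; case: ifP.
pose T (x : LSd p d) := W x /\ forall i : 'I_d, (i < j)%N -> forall n, coef (x i) n = 0.
have TD : forall x y, T x -> T y -> T (vadd x y).
  move=> x y [hx zx] [hy zy]; split; first exact: hD.
  by move=> i hi n; rewrite coefVD zx // zy // addr0.
have TN : forall x, T x -> T (vopp x).
  move=> x [hx zx]; split; first exact: hN.
  by move=> i hi n; rewrite coefVN zx // oppr0.
have TM : forall x m, T x -> T (vmuln x m).
  move=> x m [hx zx]; split; first exact: sg_muln.
  by move=> i hi n; rewrite coef_vmuln zx // mul0rn.
have TI : forall x m, T x -> T (iter m (@tau p d) x).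
  move=> x m [hx zx]; split; first exact: iter_tau.
  by move=> i hi n; rewrite coef_iter_tau zx.
pose D (n : int) := exists x, T x /\ coef (x jo) n != 0.
have Dbound : forall n, D n -> - (M%:Z) <= n.
  move=> n [x [[hx _] hne]]; rewrite leNgt; apply/negP => hlt.
  by rewrite hM in hne.
have Dne : D k.
  exists (ej k); split; last by rewrite coef_ej eqxx eqxx oner_neq0.
  split.
    apply: hk => i n hn; rewrite coef_ej; case: ifP => // _.
    by have -> : (n == k) = false by lia.
  move=> i hi n; rewrite coef_ej Ejo; have -> : (nat_of_ord i == j) = false by lia.
  by [].
have [a [Da amin']] := int_min Dbound (ex_intro _ _ Dne).
have amin : forall x, T x -> forall n, n < a -> coef (x jo) n = 0.
  move=> x hx n hn; apply/eqP; apply: contraT => hne.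
  by have := amin' n (ex_intro _ x (conj hx hne)); lia.
pose Q (b : int) := forall f : LS p, (forall n, n < b -> coef f n = 0) ->
  exists x, T x /\ forall n, coef (x jo) n = coef f n.
have QK : forall b, k <= b -> Q b.
  move=> b hb f hf; exists (fun i => if i == jo then f else ls0 p); split; last first.
    by move=> n; rewrite eqxx.
  split.
    apply: hk => i n hn; rewrite coef_if; case: ifP => // _; apply: hf; lia.
  move=> i hi n; rewrite coef_if Ejo; have -> : (nat_of_ord i == j) = false by lia.
  by [].
have QS : forall b, a <= b -> Q (b + 1) -> Q b.
  move=> b hab hQ f hf.
  case: Da => xu [Tu cu].
  set c := coef (xu jo) a in cu.
  pose xg := iter (absz (b - a)) (@tau p d) xu.
  pose s := coef f b / c.
  pose xh := vmuln xg (nat_of_ord s).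
  have Th : T xh by apply: TM; apply: TI.
  have ch : forall n, coef (xh jo) n = coef (xu jo) (n - (absz (b - a))%:Z) *+ s.
    by move=> n; rewrite coef_vmuln coef_iter_tau.
  pose f' := lsadd f (lsopp (xh jo)).
  have hf' : forall n, n < b + 1 -> coef f' n = 0.
    move=> n hn; rewrite coefD coefN ch.
    case: (ltP n b) => hnb.
      rewrite hf // amin //; last by lia.
      by rewrite mul0rn oppr0 addr0.
    have -> : n = b by lia.
    have -> : b - (absz (b - a))%:Z = a by lia.
    by rewrite -mulr_natr Fp_natr // /s mulrCA mulfV // mulr1 subrr.
  have [x' [Tx' hx']] := hQ f' hf'.
  exists (vadd x' xh); split; first exact: TD.
  by move=> n; rewrite coefVD hx' coefD coefN subrK.
have QA : Q a.
  apply: (@down Q a (Num.max k a)); first by rewrite le_max lexx orbT.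
  - by apply: QK; rewrite le_max lexx.
  - exact: QS.
have hma : forall n, n < a -> coef (mono p a) n = 0.
  by move=> n hn; rewrite coefM (_ : (n == a) = false) //; lia.
have [xv [Tv hv]] := QA (mono p a) hma.
pose lo := - (M%:Z).
pose len := absz (k + M%:Z).
have hwin : k <= lo + len%:Z by rewrite /lo /len; lia.
pose q := fun (i : 'I_d) (n : int) => coef (xv i) n.
pose f := phi jo a q lo len.
have ej0 : ej 0 jo = mono p 0 by rewrite /ej eqxx.
have Wv : W (f (ej 0)).
  pose dv := vadd xv (vopp (f (ej 0))).
  have Wd : W dv.
    apply: hk => i n hn; rewrite coefVD coefVN.
    case: (eqVneq i jo) => [->|hne].
      by rewrite /f phi_jo coefS coef_ej eqxx hv coefM subr_eq0 subrr.
    rewrite /f phi_ne // coefD coef_ej (negbTE hne) add0r ej0 coefL_one.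
    case: ifP => hw; first by rewrite subrr.
    have hn' : n < lo by move: hw; rewrite /lo; lia.
    by rewrite /q hM ?subr0 //; case: Tv.
  have -> : f (ej 0) = vadd xv (vopp dv).
    by apply: vext => i n; rewrite coefVD coefVN coefVD coefVN opprB addrC subrK.
  by apply: hD; [case: Tv | apply: hN].
have fA := @phi_aut p d jo a q lo len.
have fT : forall x, f (tau x) = tau (f x) by move=> x; apply: phi_tau.
have [[s0 [sD sN]] sO sC sT] := transfer fA fT (conj h0 (conj hD hN)) hO hC hT.
exists f; split; first exact: fA.
split; first exact: fT.
split=> //; split.
- move=> x hx i hi n hn; rewrite ltnS leq_eqVlt in hi; case/orP: hi => [/eqP hij | hij].
    have ij : i = jo by apply: val_inj.
    subst i.
    have Wz := zero_low hI' hx (leqnn j).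
    set z := (fun i : 'I_d => _) in Wz.
    have Tz : T z.
      split; first exact: Wz.
      by move=> i' hi' m; rewrite /z coef_if hi' coef0.
    have := amin _ Tz (n + a) (ltac:(lia)).
    by rewrite /z coef_if /= ltnn /f phi_jo coefS addrK.
  have hne : i != jo by rewrite Ejo; apply/eqP; lia.
  have := hA _ hx i hij n hn; rewrite /f phi_ne // coefD coefL big1 ?addr0 //.
  by move=> m _; rewrite /q (proj2 Tv) // mul0r.
- move=> x i hi hsupp hO'.
  rewrite ltnS leq_eqVlt in hi; case/orP: hi => [/eqP hij | hij]; last first.
    have hne : jo != i by rewrite eq_sym Ejo; apply/eqP; lia.
    have -> : f x = x.
      apply: vext => i' n; case: (eqVneq i' jo) => [->|h'].
        by rewrite /f phi_jo coefS !hsupp.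
      rewrite /f phi_ne // coefD coefL big1 ?addr0 //.
      by move=> m _; rewrite hsupp ?mulr0.
    exact: hB _ i hij hsupp hO'.
  have ij : i = jo by apply: val_inj.
  subst i.
  have [k' hk'] := open0 sO s0.
  have Wej : forall b : nat, W (f (ej b%:Z)).
    elim=> [|b IH]; first exact: Wv.
    have -> : ej b.+1%:Z = tau (ej b%:Z).
      apply: vext => i' n; rewrite coefVT !coef_ej; case: ifP => // _.
      suff -> : (n - 1 == b%:Z) = (n == b.+1%:Z) by [].
      by apply/idP/idP => /eqP h; apply/eqP; lia.
    exact: sT _ IH.
  pose R b := forall x, (forall i', i' != jo -> forall n, coef (x i') n = 0) ->
    (forall n, n < b -> coef (x jo) n = 0) -> W (f x).
  have RK : R (Num.max k' 0).
    move=> y hs hz; apply: hk' => i' n hn; case: (eqVneq i' jo) => [->|h'].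
      by apply: hz; rewrite lt_max hn.
    exact: hs.
  have RS : forall b, 0 <= b -> R (b + 1) -> R b.
    move=> b hb hR y hs hz.
    pose m := nat_of_ord (coef (y jo) b).
    pose h := vmuln (ej (absz b)%:Z) m.
    have Wh : W (f h) by apply: (sg_muln (V := fun x => W (f x))) => //; split.
    have Wy' : W (f (vadd y (vopp h))).
      apply: hR.
        move=> i' h' n; rewrite coefVD coefVN coef_vmuln coef_ej (negbTE h').
        by rewrite mul0rn oppr0 addr0 hs.
      move=> n hn; rewrite coefVD coefVN coef_vmuln coef_ej eqxx.
      case: (ltP n b) => hnb.
        rewrite hz //; have -> : (n == (absz b)%:Z) = false by lia.
        by rewrite mul0rn oppr0 addr0.
      have -> : n = b by lia.
      have -> : (b == (absz b)%:Z) by lia.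
      by rewrite /m -mulr_natl mulr1 Fp_natr // subrr.
    have -> : y = vadd (vadd y (vopp h)) h.
      by apply: vext => i' n; rewrite !coefVD coefVN addrNK.
    exact: sD _ _ Wy' Wh.
  have R0 : R 0.
    apply: (@down R 0 (Num.max k' 0)); first by rewrite le_max lexx orbT.
    - exact: RK.
    - exact: RS.
  exact: R0 x hsupp hO'.
Qed.

Lemma main_ind p d (hp : prime p) : forall n j (W : vset p d), (j + n = d)%N -> Inv j W ->
  exists th : LSd p d -> LSd p d, top_group_aut th /\ (forall x, th (tau x) = tau (th x)) /\
    (forall y, vimage th (@powser_d p d) y <-> W y).
Proof.
elim=> [|n IH] j W hjn hI.
  rewrite addn0 in hjn; subst j.
  exists (fun x => x); split; first exact: aut_id.
  split=> // y; split.
    case=> x [hx <-]; have := zero_high hI hx (leqnn d).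
    suff -> : (fun i : 'I_d => if (i < d)%N then x i else ls0 p) = x by [].
    by apply: functional_extensionality => i; rewrite ltn_ord.
  move=> hy; exists y; split=> //.
  case: hI => _ _ _ _ [hA _] i m hm; exact: hA y hy i (ltn_ord i) m hm.
have hjd : (j < d)%N by lia.
have [f [fA [fT hI']]] := step hp hjd hI.
have [th [thA [thT thI]]] := IH j.+1 _ (ltac:(lia)) hI'.
exists (fun x => f (th x)); split; first exact: aut_comp.
split; first by move=> x; rewrite thT fT.
move=> y; split.
  case=> x [hx <-].
  exact: (proj1 (thI (th x))) (ex_intro _ x (conj hx erefl)).
move=> hy; case: fA => _ [f' [f1 [f2 _]]].
have : vimage th (@powser_d p d) (f' y) by apply/thI; rewrite f2.
case=> x [hx hxe]; exists x; split=> //; by rewrite hxe f2.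
Qed.

Theorem mainTheorem10 (p d : nat) (hp : prime p) (V : vset p d) :
  vsubgroup V -> vopen V -> vcompact V ->
  (forall x, vimage (@tau p d) V x -> V x) ->
  ~ (forall x, V x -> vimage (@tau p d) V x) ->
  exists th : LSd p d -> LSd p d,
    top_group_aut th /\
    (forall x, th (tau x) = tau (th x)) /\
    (forall y, vimage th (@powser_d p d) y <-> V y).
Proof.
move=> hS hO hC hT _.
apply: (main_ind hp (n := d) (j := 0%N)) => //.
split=> //.
  by move=> x hx; apply: hT; exists x.

Qed.
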